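(* Let $Q\succeq0$, $q\in\mathbb{R}^n$, $A\succ0$, $v\in\mathbb{R}^n$, and let $m>0$ satisfy Requirement 1 (see context). For $k\in\mathbb{N}$ let $x_k^\star$ be the unique minimizer of $J_k$ over $\mathbb{R}^n$. Then: (1) $x_k^\star\in\mathcal{C}$ for every $k\in\mathbb{N}$; (2) $x_k^\star\to x^\star$ as $k\to\infty$, where $x^\star=\arg\min_{x\in\mathcal{X}^\star}g(x)$ is the (unique) minimizer of $g$ over the solution set $\mathcal{X}^\star$ of the constrained problem; in particular $x^\star\in\mathcal{X}^\star$.
   Context: $Q\in\mathbb{R}^{n\times n}$ symmetric positive semidefinite, $A\in\mathbb{R}^{n\times n}$ symmetric positive definite. $f(x)=\tfrac12 x^\top Qx+q^\top x$, $g(x)=(x-v)^\top A(x-v)$, $\mathcal{C}=\{x: g(x)\le1\}$, $\partial\mathcal{C}=\{x:g(x)=1\}$. The constrained problem is $\min_{x\in\mathcal{C}} f(x)$ with (nonempty, compact, convex) solution set $\mathcal{X}^\star=\arg\min_{x\in\mathcal{C}}f(x)$. For $k\in\mathbb{N}=\{1,2,\dots\}$: $p_k(x)=\frac{m}{k}g(x)^k$, $J_k(x)=f(x)+p_k(x)$. Requirement 1: $m\ge m_{\min}:=\max(\hat m_{\min},0)$, where $\hat m_{\min}=\max_{x:\,g(x)=1}\; -\frac{\langle\nabla g(x),\nabla f(x)\rangle}{\langle\nabla g(x),\nabla g(x)\rangle}$; equivalently $m\ge0$ and $\langle \nabla g(x),\nabla f(x)+m\nabla g(x)\rangle\ge0$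 for all $x$ with $g(x)=1$. *)

(* Defs.v *)
From HB Require Import structures.
From mathcomp Require Import all_boot all_order all_algebra.
From mathcomp Require Import all_classical all_reals all_analysis.
Set Implicit Arguments. Unset Strict Implicit. Unset Printing Implicit Defensive.
Import Order.TTheory GRing.Theory Num.Theory.
Import numFieldNormedType.Exports.
Local Open Scope ring_scope.

Section Defs.
Variables (R : realType) (n : nat).

Definition dotv (u w : 'cV[R]_n) : R := (u^T *m w) 0 0.

Definition qform (M : 'M[R]_n) (x : 'cV[R]_n) : R := (x^T *m M *m x) 0 0.

Definition psd (M : 'M[R]_n) : Prop := M^T = M /\ forall x, 0 <= qform M x.
Definition pd (M : 'M[R]_n) : Prop := M^T = M /\ forall x, x != 0 -> 0 < qform M x.

Definition fobj (Q : 'M[R]_n) (q : 'cV[R]_n) (x : 'cV[R]_n) : R :=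
  2^-1 * qform Q x + dotv q x.
Definition gcon (A : 'M[R]_n) (v : 'cV[R]_n) (x : 'cV[R]_n) : R :=
  qform A (x - v).

(* gradients: grad f(x) = Q x + q (Q symmetric), grad g(x) = 2 A (x - v) (A symmetric) *)
Definition grad_f (Q : 'M[R]_n) (q : 'cV[R]_n) (x : 'cV[R]_n) : 'cV[R]_n := Q *m x + q.
Definition grad_g (A : 'M[R]_n) (v : 'cV[R]_n) (x : 'cV[R]_n) : 'cV[R]_n :=
  2%:R *: (A *m (x - v)).

Definition pen (A : 'M[R]_n) (v : 'cV[R]_n) (m : R) (k : nat) (x : 'cV[R]_n) : R :=
  m / k%:R * gcon A v x ^+ k.
Definition Jk Q q A v m k (x : 'cV[R]_n) : R := fobj Q q x + pen A v m k x.

(* Requirement 1 (equivalent form given in the context) *)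
Definition requirement1 Q q A v (m : R) : Prop :=
  0 <= m /\ forall x, gcon A v x = 1 ->
    0 <= dotv (grad_g A v x) (grad_f Q q x + m *: grad_g A v x).

Definition solset Q q A v (x : 'cV[R]_n) : Prop :=
  gcon A v x <= 1 /\ forall y, gcon A v y <= 1 -> fobj Q q x <= fobj Q q y.

Definition gmin_on_solset Q q A v (x : 'cV[R]_n) : Prop :=
  solset Q q A v x /\ forall y, solset Q q A v y -> gcon A v x <= gcon A v y.

End Defs.

(* Main.v *)
Require Import Defs.
From HB Require Import structures.
From mathcomp Require Import all_boot all_order all_algebra.
From mathcomp Require Import all_classical all_reals all_analysis.
From mathcomp.algebra_tactics Require Import ring lra.
Import Order.TTheory GRing.Theory Num.Theory.
Import numFieldNormedType.Exports.
Local Open Scope classical_set_scope.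
Local Open Scope ring_scope.

Section Alg.
Context {R : realType} {n : nat}.
Implicit Types (M : 'M[R]_n) (x y u w : 'cV[R]_n).

Definition bil M x y : R := (x^T *m M *m y) 0 0.

Lemma bilDl M x y w : bil M (x + y) w = bil M x w + bil M y w.
Proof. by rewrite /bil linearD !mulmxDl mxE. Qed.
Lemma bilDr M x y w : bil M w (x + y) = bil M w x + bil M w y.
Proof. by rewrite /bil !mulmxDr mxE. Qed.
Lemma bilZl M c x w : bil M (c *: x) w = c * bil M x w.
Proof. by rewrite /bil linearZ -!scalemxAl mxE. Qed.
Lemma bilZr M c x w : bil M w (c *: x) = c * bil M w x.
Proof. by rewrite /bil -!scalemxAr mxE. Qed.
Lemma bilNl M x w : bil M (- x) w = - bil M x w.
Proof. by rewrite -scaleN1r bilZl mulN1r. Qed.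
Lemma bilNr M x w : bil M w (- x) = - bil M w x.
Proof. by rewrite -scaleN1r bilZr mulN1r. Qed.
Lemma bil0l M w : bil M 0 w = 0.
Proof. by rewrite /bil linear0 !mul0mx mxE. Qed.
Lemma bil0r M w : bil M w 0 = 0.
Proof. by rewrite /bil mulmx0 mxE. Qed.

Lemma bilC M x y : M^T = M -> bil M x y = bil M y x.
Proof.
move=> sM; rewrite /bil -[in LHS](trmxK (x^T *m M *m y)) mxE.
by rewrite !trmx_mul trmxK sM mulmxA.
Qed.

Lemma dotvE x y : dotv x y = bil 1%:M x y.
Proof. by rewrite /dotv /bil mulmx1. Qed.

Lemma dotvC x y : dotv x y = dotv y x.
Proof. by rewrite !dotvE bilC // trmx1. Qed.

Lemma dotv_mul M x y : M^T = M -> dotv (M *m x) y = bil M x y.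
Proof. by move=> sM; rewrite /dotv /bil trmx_mul sM. Qed.

Lemma dotvDl x y w : dotv (x + y) w = dotv x w + dotv y w.
Proof. by rewrite !dotvE bilDl. Qed.
Lemma dotvDr x y w : dotv w (x + y) = dotv w x + dotv w y.
Proof. by rewrite !dotvE bilDr. Qed.
Lemma dotvZl c x w : dotv (c *: x) w = c * dotv x w.
Proof. by rewrite !dotvE bilZl. Qed.
Lemma dotvZr c x w : dotv w (c *: x) = c * dotv w x.
Proof. by rewrite !dotvE bilZr. Qed.
Lemma dotvNl x w : dotv (- x) w = - dotv x w.
Proof. by rewrite !dotvE bilNl. Qed.
Lemma dotvNr x w : dotv w (- x) = - dotv w x.
Proof. by rewrite !dotvE bilNr. Qed.

Lemma dotvvE x : dotv x x = \sum_i x i 0 ^+ 2.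
Proof. by rewrite /dotv mxE; apply: eq_bigr => i _; rewrite mxE expr2. Qed.

Lemma dotv_ge0 x : 0 <= dotv x x.
Proof. by rewrite dotvvE sumr_ge0 // => i _; rewrite sqr_ge0. Qed.

Lemma dotv_eq0 x : dotv x x = 0 -> x = 0.
Proof.
rewrite dotvvE => /eqP; rewrite psumr_eq0; last by move=> i _; rewrite sqr_ge0.
move=> /allP H; apply/matrixP => i j; rewrite ord1 mxE.
by have := H i (mem_index_enum _); rewrite sqrf_eq0 => /eqP.
Qed.

Lemma qform_exp M y u t : M^T = M ->
  qform M (y + t *: u) = qform M y + 2 * t * bil M y u + t ^+ 2 * qform M u.
Proof.
move=> sM; rewrite /qform -!/(bil _ _ _) bilDl !bilDr !bilZl !bilZr (bilC M u y sM).
ring.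
Qed.


Lemma fexp Q0 q0 y u t : Q0^T = Q0 ->
  fobj Q0 q0 (y + t *: u) =
  fobj Q0 q0 y + t * dotv (grad_f Q0 q0 y) u + 2^-1 * t ^+ 2 * qform Q0 u.
Proof.
move=> sQ; rewrite /fobj qform_exp // /grad_f dotvDl dotv_mul // dotvDr dotvZr.
by field.
Qed.

Lemma gexp A v y u t : A^T = A ->
  gcon A v (y + t *: u) =
  gcon A v y + t * dotv (grad_g A v y) u + t ^+ 2 * qform A u.
Proof.
move=> sA; rewrite /gcon (_ : y + t *: u - v = (y - v) + t *: u); last first.
  by rewrite addrAC.
rewrite qform_exp // /grad_g dotvZl dotv_mul //; ring.
Qed.

Lemma qform_ge0_pd A x : (forall x, x != 0 -> 0 < qform A x) -> 0 <= qform A x.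
Proof.
move=> H; have [->|/H/ltW//] := eqVneq x 0.
by rewrite /qform mulmx0 mxE.
Qed.

Lemma qform_eq0_pd A x : (forall x, x != 0 -> 0 < qform A x) -> qform A x <= 0 -> x = 0.
Proof.
move=> H; have [->//|/H] := eqVneq x 0; by rewrite leNgt => ->.
Qed.

End Alg.


Section Pow.
Context {R : realFieldType}.
Implicit Types a b : R.

Lemma pow_sum_ge a b k : 0 <= b -> b <= a ->
  k%:R * b ^+ k.-1 <= \sum_(i < k) a ^+ (k.-1 - i) * b ^+ i.
Proof.
move=> b0 ba; have a0 : 0 <= a by apply: le_trans ba.
rewrite (_ : k%:R * b ^+ k.-1 = \sum_(i < k) b ^+ k.-1); last by rewrite sumr_const card_ord mulr_natl.
apply: ler_sum => i _.
have ik : (i <= k.-1)%N by case: k i => [[]//|k] [i /=]; rewrite ltnS.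
rewrite -{1}(subnK ik) exprD ler_wpM2r ?exprn_ge0 //.
by apply: lerXn2r; rewrite ?nnegrE.
Qed.

Lemma pow_sum_le a b k : 0 <= a -> a <= b ->
  \sum_(i < k) a ^+ (k.-1 - i) * b ^+ i <= k%:R * b ^+ k.-1.
Proof.
move=> a0 ab; have b0 : 0 <= b by apply: le_trans ab.
rewrite (_ : k%:R * b ^+ k.-1 = \sum_(i < k) b ^+ k.-1); last by rewrite sumr_const card_ord mulr_natl.
apply: ler_sum => i _.
have ik : (i <= k.-1)%N by case: k i => [[]//|k] [i /=]; rewrite ltnS.
rewrite -[in leRHS](subnK ik) exprD ler_wpM2r ?exprn_ge0 //.
by apply: lerXn2r; rewrite ?nnegrE.
Qed.

Lemma pow_tangent a b k : 0 <= a -> 0 <= b ->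
  k%:R * b ^+ k.-1 * (a - b) <= a ^+ k - b ^+ k.
Proof.
move=> a0 b0; rewrite subrXX [leRHS]mulrC.
have [ba|ab] := leP b a.
  by rewrite ler_wpM2r ?subr_ge0 // pow_sum_ge.
by rewrite ler_wnM2r ?subr_le0 ?(ltW ab) // pow_sum_le // ltW.
Qed.

Lemma pow_diff_le a b j : 0 <= a <= 1 -> 0 <= b <= 1 ->
  (a ^+ j - b ^+ j) * (a - b) <= j%:R * (a - b) ^+ 2.
Proof.
move=> /andP[a0 a1] /andP[b0 b1].
rewrite subrXX mulrAC -expr2 mulrC ler_wpM2r ?sqr_ge0 //.
rewrite (_ : j%:R = \sum_(i < j) (1:R)); last by rewrite sumr_const card_ord.
apply: ler_sum => i _.
by rewrite mulr_ile1 ?exprn_ge0 ?exprn_ile1.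
Qed.

Lemma pow_rem_le a b k : 0 <= a <= 1 -> 0 <= b <= 1 ->
  a ^+ k - b ^+ k - k%:R * b ^+ k.-1 * (a - b) <= k%:R * k%:R * (a - b) ^+ 2.
Proof.
move=> ha hb; have /andP[a0 a1] := ha; have /andP[b0 b1] := hb.
case: k => [|k]; first by rewrite !expr0 subrr; lra.

have h1 := pow_tangent b a k.+1 b0 a0.
have h2 := pow_diff_le a b k ha hb.
rewrite /= in h1.
have hk : k%:R <= (k.+1)%:R :> R by rewrite ler_nat.
have hs : 0 <= (a - b) ^+ 2 by rewrite sqr_ge0.
have hk0 : 0 <= (k.+1)%:R :> R by [].
have h3 : (k.+1)%:R * ((a ^+ k - b ^+ k) * (a - b)) <= (k.+1)%:R * (k%:R * (a - b) ^+ 2).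
  by rewrite ler_wpM2l.
nra.
Qed.


Lemma small_t_ge0 (t0 h C : R) : 0 < t0 ->
  (forall t, 0 < t -> t <= t0 -> 0 <= t * h + t ^+ 2 * C) -> 0 <= h.
Proof.
move=> t00 H; rewrite leNgt; apply/negP => h0.
have := H t0 t00 (lexx _) => H0.
have C0 : 0 < C.
  rewrite ltNge; apply/negP => C0.
  have : t0 ^+ 2 * C <= 0 by rewrite mulr_ge0_le0 // sqr_ge0.
  have : t0 * h < 0 by rewrite pmulr_rlt0.
  lra.
pose s := - h / (2 * C).
have s0 : 0 < s by rewrite /s divr_gt0 // ?oppr_gt0 // mulr_gt0.
have sC : s * C = - h / 2 by rewrite /s; field; rewrite gt_eqF.
pose t := Num.min t0 s.
have t0' : 0 < t by rewrite lt_min t00 s0.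
have tt0 : t <= t0 by rewrite ge_min lexx.
have ts : t <= s by rewrite ge_min lexx orbT.
have := H t t0' tt0.
have : t * C <= s * C by rewrite ler_pM2r.
rewrite sC => tC.
have : t ^+ 2 * C <= t * (- h / 2).
  by rewrite expr2 -mulrA ler_pM2l.
have : 0 < t * (- h) by rewrite mulr_gt0 // oppr_gt0.
lra.
Qed.

Lemma feas_t (b be ga : R) : 0 <= ga -> b <= 1 -> (b < 1 \/ be < 0) ->
  exists2 t0, 0 < t0 & forall t, 0 < t -> t <= t0 ->
    t <= 1 /\ b + t * be + t ^+ 2 * ga <= 1.
Proof.
move=> ga0 b1 [b1'|be0].
- pose c := (1 - b) / (`|be| + ga + 1).
  have d0 : 0 < `|be| + ga + 1 by rewrite ltr_wpDl // addr_ge0.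
  have c0 : 0 < c by rewrite divr_gt0 // subr_gt0.
  have cd : c * (`|be| + ga + 1) = 1 - b by rewrite /c mulfVK // gt_eqF.
  exists (Num.min c 1); first by rewrite lt_min c0 ltr01.
  move=> t t0; rewrite le_min => /andP[tc t1]; split => //.
  have : t * (`|be| + ga + 1) <= c * (`|be| + ga + 1) by rewrite ler_pM2r.
  rewrite cd => H.
  have : t * be <= t * `|be| by rewrite ler_pM2l // ler_norm.
  have : t ^+ 2 * ga <= t * ga by rewrite expr2 -mulrA ler_pM2l // ?ler_piMl.
  have : 0 <= t by exact: ltW.
  nra.
- pose c := - be / (ga + 1).
  have d0 : 0 < ga + 1 by rewrite ltr_wpDl.
  have c0 : 0 < c by rewrite divr_gt0 // oppr_gt0.
  have cd : c * (ga + 1) = - be by rewrite /c mulfVK // gt_eqF.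
  exists (Num.min c 1); first by rewrite lt_min c0 ltr01.
  move=> t t0; rewrite le_min => /andP[tc t1]; split => //.
  have : t * (ga + 1) <= c * (ga + 1) by rewrite ler_pM2r.
  rewrite cd => H.
  have : t * ga * t <= - be * t.
    have : t * ga <= - be by nra.
    by move=> h; rewrite ler_pM2r.
  nra.
Qed.

End Pow.


Section Topo.
Context {R : realType}.

Lemma entry_le_norm p r (x : 'M[R]_(p, r)) i j : `|x i j| <= `|x|.
Proof.
rewrite [leRHS]/Num.norm /= mx_normrE; apply/bigmax_geP; right => /=.
by exists (i, j).
Qed.

Lemma norm_trmx_le p r (x : 'M[R]_(p, r)) : `|x^T| <= `|x|.
Proof.
rewrite [leLHS]/Num.norm /= mx_normrE; apply/bigmax_leP; split => //.
by move=> [i j] _ /=; rewrite mxE entry_le_norm.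
Qed.

Lemma norm_trmx p r (x : 'M[R]_(p, r)) : `|x^T| = `|x|.
Proof.
apply/eqP; rewrite eq_le norm_trmx_le /=.
by rewrite -[x in `|x| <= _]trmxK norm_trmx_le.
Qed.

Lemma trmx_continuous p r : continuous (@trmx R p r).
Proof.
move=> x; apply/(@cvgrPdist_lt _ _ _ (nbhs x)) => e e0; near=> z.
rewrite -linearB norm_trmx.
near: z. by apply: cvgr_dist_lt.
Unshelve. all: by end_near. Qed.


Lemma EVT_min_cV n (f : 'cV[R]_n -> R) (K : set 'cV[R]_n) (M : R) :
  K !=set0 -> closed K -> (forall x, K x -> `|x| <= M) -> continuous f ->
  exists2 c, K c & forall t, K t -> f c <= f t.
Proof.
move=> [x0 Kx0] cK bK cf.
pose K' := (@trmx R 1 n) @^-1` K.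
have K'0 : K' !=set0 by exists x0^T; rewrite /K' /= trmxK.
have cK' : closed K' by apply: preimage_closed => // y _; apply: trmx_continuous.
have bK' : [bounded x | x in K'].
  rewrite /bounded_near; near=> N => r Kr /=.
  rewrite -norm_trmx; apply: le_trans (bK _ Kr) _.
  near: N; exact: nbhs_pinfty_ge (num_real M).
have cfK : {within K', continuous (f \o @trmx R 1 n)}.
  apply: continuous_subspaceT => r; apply: continuous_comp; first exact: trmx_continuous.
  exact: cf.
have [c Kc hc] := EVT_min_rV K'0 (bounded_closed_compact bK' cK') cfK.
exists c^T; first by move: Kc; rewrite inE.
move=> t Kt; have := hc t^T; rewrite /= trmxK; apply.
by rewrite inE /K' /= trmxK.
Unshelve. all: by end_near. Qed.

End Topo.


Section Cont.
Context {R : realType} {n : nat}.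

Lemma continuous_sum (I : Type) (r : seq I) (F : I -> 'cV[R]_n -> R) :
  (forall i, continuous (F i)) -> continuous (fun x => \sum_(i <- r) F i x).
Proof.
move=> Fc; elim: r => [|i r IH].
  under eq_fun do rewrite big_nil; exact: cst_continuous.
under eq_fun do rewrite big_cons.
by move=> x; apply: continuousD; [exact: Fc | exact: IH].
Qed.

Lemma entry_continuous i : continuous (fun x : 'cV[R]_n => x i 0).
Proof. exact: coord_continuous. Qed.

Lemma bil_continuous M (a b : 'cV[R]_n -> 'cV[R]_n) :
  (forall i, continuous (fun x => a x i 0)) -> (forall i, continuous (fun x => b x i 0)) ->
  continuous (fun x => bil M (a x) (b x)).
Proof.
move=> ca cb.
have -> : (fun x => bil M (a x) (b x)) =
  (fun x => \sum_(j <- index_enum 'I_n) ((\sum_(i <- index_enum 'I_n) a x i 0 * M i j) * b x j 0)).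
  apply: funext => x; rewrite /bil mxE; apply: eq_bigr => j _; rewrite mxE.
  by congr (_ * _); apply: eq_bigr => i _; rewrite mxE.
apply: continuous_sum => j x; apply: continuousM; last exact: cb.
apply: continuous_sum => i y; apply: continuousM; first exact: ca.
exact: cst_continuous.
Qed.


Lemma fobj_continuous (Q : 'M[R]_n) q : continuous (fobj Q q).
Proof.
have -> : fobj Q q = fun x => 2^-1 * bil Q x x + bil 1%:M q x.
  by apply: funext => x; rewrite /fobj dotvE.
move=> x; apply: (@continuousD R R^o _ (fun x => 2^-1 * bil Q x x) (fun x => bil 1%:M q x)).
  apply: continuousM; first exact: cst_continuous.
  by apply: bil_continuous => i; exact: entry_continuous.
apply: (bil_continuous 1%:M (fun=> q) id) => i; first exact: cst_continuous.
exact: entry_continuous.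
Qed.

Lemma gcon_continuous (A : 'M[R]_n) v : continuous (gcon A v).
Proof.
have ce : forall i, continuous (fun x : 'cV[R]_n => (x - v) i 0).
  move=> i; have -> : (fun x : 'cV[R]_n => (x - v) i 0) = fun x => x i 0 - v i 0.
    by apply: funext => x; rewrite !mxE.
  move=> x; apply: continuousB; [exact: entry_continuous | exact: cst_continuous].
exact: (bil_continuous A (fun x => x - v) (fun x => x - v)).
Qed.

Lemma normB_continuous (c : 'cV[R]_n) : continuous (fun x : 'cV[R]_n => `|x - c|).
Proof.
move=> x; apply: continuous_comp; last exact: norm_continuous.
apply: continuousB; [exact: cvg_id | exact: cst_continuous].
Qed.

End Cont.


Section Main.
Variables (R : realType) (n : nat) (Q : 'M[R]_n) (q : 'cV[R]_n)
  (A : 'M[R]_n) (v : 'cV[R]_n) (m : R).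
Hypotheses (hQ : psd Q) (hA : pd A) (m0 : 0 < m)
  (hreq : requirement1 Q q A v m).

Lemma qformZ (M : 'M[R]_n) c x : qform M (c *: x) = c ^+ 2 * qform M x.
Proof. by rewrite /qform -!/(bil _ _ _) bilZl bilZr; ring. Qed.

Lemma qformA_ge0 x : 0 <= qform A x.
Proof. exact: (@qform_ge0_pd _ _ A x hA.2). Qed.

Lemma g_ge0 x : 0 <= gcon A v x.
Proof. exact: qformA_ge0. Qed.

Lemma g_eq0 x : gcon A v x <= 0 -> x = v.
Proof. by move=> /(@qform_eq0_pd _ _ A (x - v) hA.2) /eqP; rewrite subr_eq0 => /eqP. Qed.

Lemma gv : gcon A v v = 0.
Proof. by rewrite /gcon /qform subrr mulmx0 mxE. Qed.

Lemma closed_le_fun (phi : 'cV[R]_n -> R) c : continuous phi ->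
  closed [set x | phi x <= c].
Proof.
move=> cphi; apply: (@preimage_closed _ _ phi [set y | y <= c]) => //.

Qed.

Lemma closed_ge_fun (phi : 'cV[R]_n -> R) c : continuous phi ->
  closed [set x | c <= phi x].
Proof.
move=> cphi; apply: (@preimage_closed _ _ phi [set y | c <= y]) => //.

Qed.

Lemma qform_continuous (M : 'M[R]_n) : continuous (qform M).
Proof. have := bil_continuous M id id entry_continuous entry_continuous; exact. Qed.

Lemma normalize (d : 'cV[R]_n) : d != 0 ->
  `|(`|d|)^-1 *: d| = 1 /\ d = `|d| *: ((`|d|)^-1 *: d).
Proof.
move=> d0; have nd : 0 < `|d| by rewrite normr_gt0.
split; first by rewrite normrZ ger0_norm ?invr_ge0 ?ltW // mulVf // gt_eqF.
by rewrite scalerA mulfV ?scale1r // gt_eqF.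
Qed.

Lemma C_bounded : exists M, forall x, gcon A v x <= 1 -> `|x| <= M.
Proof.
have [[s0 s01]|nS] := pselect (exists s : 'cV[R]_n, `|s| = 1); last first.
  exists `|v| => x _.
  have [xv|xv] := eqVneq (x - v) 0.
    by move/eqP: xv; rewrite subr_eq0 => /eqP ->.
  by exfalso; apply: nS; exists ((`|x - v|)^-1 *: (x - v)); case: (normalize (x - v) xv).
pose S := [set s : 'cV[R]_n | `|s| <= 1] `&` [set s | 1 <= `|s|].
have S0 : S !=set0 by exists s0; rewrite /S /= s01.
have cS : closed S.
  by apply: closedI; [apply: closed_le_fun | apply: closed_ge_fun];
     exact: norm_continuous.
have [s1 [s1a s1b] hs1] := @EVT_min_cV _ _ (qform A) S 1 S0 cS
  (fun x (Sx : S x) => Sx.1) (qform_continuous A).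
have s1n : `|s1| = 1 by apply/eqP; rewrite eq_le s1a s1b.
have s10 : s1 != 0 by rewrite -normr_eq0 s1n oner_neq0.
pose la := qform A s1.
have la0 : 0 < la by apply: hA.2.
exists (`|v| + 1 + la^-1) => x gx.
have [xv|xv] := eqVneq (x - v) 0.
  move/eqP: xv; rewrite subr_eq0 => /eqP ->.
  by rewrite -addrA lerDl addr_ge0 // invr_ge0 ltW.
have [un dE] := normalize (x - v) xv.
have hu : la <= qform A ((`|x - v|)^-1 *: (x - v)).
  by apply: hs1; rewrite /S /= un lexx.
have hq : `|x - v| ^+ 2 * la <= 1.
  apply: le_trans gx; rewrite /gcon [in leRHS]dE qformZ.
  by rewrite ler_wpM2l // sqr_ge0.
have hd : `|x - v| <= 1 + la^-1.
  have il : 0 < la^-1 by rewrite invr_gt0.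
  have e : la * la^-1 = 1 by rewrite mulfV // gt_eqF.
  have h2 : `|x - v| ^+ 2 <= la^-1.
    have := ler_wpM2r (ltW il) hq; by rewrite -mulrA e mulr1 mul1r.
  have nd : 0 <= `|x - v| by [].
  rewrite expr2 in h2; nra.
have -> : x = (x - v) + v by rewrite subrK.
apply: le_trans (ler_normD _ _) _; lra.
Qed.


Lemma gpow_continuous k : continuous (fun x => gcon A v x ^+ k).
Proof.
elim: k => [|k IH].
  under eq_fun do rewrite expr0; exact: cst_continuous.
under eq_fun do rewrite exprS.
move=> x; apply: (@continuousM R _ (gcon A v) (fun x => gcon A v x ^+ k)).
  exact: gcon_continuous.
exact: IH.
Qed.

Lemma Jk_continuous k : continuous (Jk Q q A v m k).
Proof.
move=> x; apply: (@continuousD R R^o _ (fobj Q q) (pen A v m k)).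
  exact: fobj_continuous.
apply: (@continuousM R _ (fun=> m / k%:R) (fun x => gcon A v x ^+ k)).
  exact: cst_continuous.
exact: gpow_continuous.
Qed.


Lemma variational k (k0 : (0 < k)%N) y :
  gcon A v y <= 1 ->
  (forall z, gcon A v z <= 1 -> Jk Q q A v m k y <= Jk Q q A v m k z) ->
  forall u, (gcon A v y < 1 \/ dotv (grad_g A v y) u < 0) ->
  0 <= dotv (grad_f Q q y + (m * gcon A v y ^+ k.-1) *: grad_g A v y) u.
Proof.
move=> gy1 hy u hu.
set b := gcon A v y; set be := dotv (grad_g A v y) u; set ga := qform A u.
set al := dotv (grad_f Q q y) u; set de := qform Q u.
set P := b ^+ k.-1.
have b0 : 0 <= b := g_ge0 y.
have ga0 : 0 <= ga := qformA_ge0 u.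
have de0 : 0 <= de by apply: hQ.2.
have P0 : 0 <= P by rewrite exprn_ge0.
have P1 : P <= 1 by rewrite exprn_ile1.
have [t0 t00 ht0] := feas_t b be ga ga0 gy1 hu.
rewrite dotvDl dotvZl -/al -/be.
have kR : 0 < k%:R :> R by rewrite ltr0n.
apply: (small_t_ge0 t0 _ (2^-1 * de + m * ga + m * k%:R * (`|be| + ga) ^+ 2) t00).
move=> t tp tt0; have [t1 ha1] := ht0 t tp tt0.
have ga' : gcon A v (y + t *: u) = b + t * be + t ^+ 2 * ga.
  by rewrite gexp //; case: hA.
have fa : fobj Q q (y + t *: u) = fobj Q q y + t * al + 2^-1 * t ^+ 2 * de.
  by rewrite fexp //; case: hQ.
have := hy (y + t *: u); rewrite ga' => /(_ ha1).
rewrite /Jk /pen fa ga' -/b.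
set a := b + t * be + t ^+ 2 * ga.
have a0 : 0 <= a by rewrite /a -ga' g_ge0.
have haa : 0 <= a <= 1 by rewrite a0 ha1.
have hbb : 0 <= b <= 1 by rewrite b0 gy1.
have hr := pow_rem_le a b k haa hbb.
have hr2 : m / k%:R * (a ^+ k - b ^+ k) <= m * P * (a - b) + m * k%:R * (a - b) ^+ 2.
  have mk0 : 0 <= m / k%:R by rewrite divr_ge0 // ltW.
  have := ler_wpM2l mk0 (_ : a ^+ k - b ^+ k <= k%:R * P * (a - b) + k%:R * k%:R * (a - b) ^+ 2).
  move=> /(_ ltac:(rewrite /P; lra)) /le_trans; apply.
  by rewrite le_eqVlt; apply/orP; left; apply/eqP; field; rewrite gt_eqF.
have ab : a - b = t * (be + t * ga) by rewrite /a; ring.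
rewrite ab in hr2.
have hsq : (be + t * ga) ^+ 2 <= (`|be| + ga) ^+ 2.
  have tg : t * ga <= ga by rewrite ler_piMl // ltW.
  have tg0 : 0 <= t * ga by rewrite mulr_ge0 // ltW.
  have h1 : be <= `|be| by rewrite ler_norm.
  have h2 : - be <= `|be| by rewrite -normrN ler_norm.
  have h3 : 0 <= (`|be| + ga - (be + t * ga)) * (`|be| + ga + (be + t * ga)).
    by rewrite mulr_ge0 //; lra.
  nra.
have e1 : m * P * (t ^+ 2 * ga) <= m * (t ^+ 2 * ga).
  rewrite -mulrA; apply: ler_wpM2l; first exact: ltW.
  by apply: ler_piMl => //; rewrite mulr_ge0 // sqr_ge0.
have e2 : m * k%:R * (t * (be + t * ga)) ^+ 2 <= m * k%:R * (t ^+ 2 * (`|be| + ga) ^+ 2).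
  rewrite exprMn; apply: ler_wpM2l; first by rewrite mulr_ge0 // ltW.
  by apply: ler_wpM2l => //; rewrite sqr_ge0.
move=> H.
have e3 : m * P * (t * (be + t * ga)) = t * (m * P * be) + m * P * (t ^+ 2 * ga) by ring.
have e4 : m / k%:R * a ^+ k - m / k%:R * b ^+ k = m / k%:R * (a ^+ k - b ^+ k) by ring.
lra.
Qed.


Lemma dotv_eq0' (x : 'cV[R]_n) : dotv x x <= 0 -> x = 0.
Proof. by move=> h; apply: dotv_eq0; apply/eqP; rewrite eq_le h dotv_ge0. Qed.

Lemma gradg_dot y : dotv (grad_g A v y) (y - v) = 2 * gcon A v y.
Proof. by rewrite /grad_g dotvZl dotv_mul //; case: hA. Qed.

Lemma grad_zero k (k0 : (0 < k)%N) y :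
  gcon A v y <= 1 ->
  (forall z, gcon A v z <= 1 -> Jk Q q A v m k y <= Jk Q q A v m k z) ->
  grad_f Q q y + (m * gcon A v y ^+ k.-1) *: grad_g A v y = 0.
Proof.
move=> gy1 hy; have V := variational k k0 y gy1 hy.
set H := grad_f Q q y + _ *: _.
have [b1|b1] := ltP (gcon A v y) 1.
  have := V (- H) (or_introl b1); rewrite dotvNr => h.
  by apply: dotv_eq0'; lra.
have b1' : gcon A v y = 1 by apply/eqP; rewrite eq_le gy1 b1.
set G := grad_g A v y.
have HE : H = grad_f Q q y + m *: G by rewrite /H b1' expr1n mulr1.
have GG : 0 < dotv G G.
  rewrite lt_def dotv_ge0 andbT; apply/eqP => /dotv_eq0 G0.
  have := gradg_dot y; rewrite -/G G0 /dotv linear0 mul0mx mxE b1'.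
  lra.
have req := hreq.2 y b1'; rewrite -/G -HE dotvC in req.
have h0 : dotv G (- G) < 0 by rewrite dotvNr oppr_lt0.
have := V (- G) (or_intror h0); rewrite -/H dotvNr => h1'.
have h2 : dotv G (- (H + G)) < 0.
  by rewrite dotvNr dotvDr (dotvC G H); lra.
have := V _ (or_intror h2); rewrite -/H dotvNr dotvDr => h3.
by apply: dotv_eq0'; lra.
Qed.


Lemma part1 k (k0 : (0 < k)%N) x :
  (forall y, Jk Q q A v m k x <= Jk Q q A v m k y) -> gcon A v x <= 1.
Proof.
move=> hx.
have [M hM] := C_bounded.
have C0 : [set z | gcon A v z <= 1] !=set0 by exists v; rewrite /= gv ler01.
have [y Cy hy] := @EVT_min_cV _ _ (Jk Q q A v m k) _ M C0
  (closed_le_fun _ 1 (gcon_continuous A v)) hM (Jk_continuous k).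
have H0 := grad_zero k k0 y Cy hy.
rewrite leNgt; apply/negP => gx.
have Cy1 : gcon A v y <= 1 := Cy.
set b := gcon A v y in Cy1 H0.
set G := grad_g A v y in H0.
set F := grad_f Q q y in H0.
set P := b ^+ k.-1 in H0.
set d := x - y.
have xE : x = y + 1 *: d by rewrite scale1r /d addrC subrK.
have fx : fobj Q q x = fobj Q q y + dotv F d + 2^-1 * qform Q d.
  by rewrite xE fexp ?mul1r ?expr1n ?mulr1 //; case: hQ.
have gxE : gcon A v x = b + dotv G d + qform A d.
  by rewrite xE gexp ?mul1r ?expr1n ?mul1r //; case: hA.
have FE : dotv F d = - (m * P) * dotv G d.
  have d00 : dotv 0 d = 0 by rewrite /dotv linear0 mul0mx mxE.
  have := congr1 (fun w => dotv w d) H0; rewrite /= dotvDl dotvZl d00 => h.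
  lra.
have Jxy := hx y; rewrite /Jk /pen fx in Jxy.
have qQ0 : 0 <= qform Q d by apply: hQ.2.
have kR : 0 < k%:R :> R by rewrite ltr0n.
have b0 : 0 <= b := g_ge0 y.
have d0 : d != 0.
  apply/eqP => d0; move: gx; rewrite gxE d0 /dotv mulmx0 mxE.
  rewrite /qform mulmx0 mxE; lra.
have qA0 : 0 < qform A d by apply: hA.2.
have [bp|] := ltP 0 b.
  have P0 : 0 < P by rewrite exprn_gt0.
  have := pow_tangent (gcon A v x) b k (g_ge0 x) b0; rewrite -/P => ht.
  have ht2 : m * P * (gcon A v x - b) <= m / k%:R * (gcon A v x ^+ k - b ^+ k).
    have := ler_wpM2l (_ : 0 <= m / k%:R) ht.
    move=> /(_ ltac:(by rewrite divr_ge0 // ltW)) /(le_trans _); apply.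
    by rewrite le_eqVlt; apply/orP; left; apply/eqP; field; rewrite gt_eqF.
  have e : m * P * (gcon A v x - b) = m * P * dotv G d + m * P * qform A d.
    by rewrite gxE; ring.
  rewrite -/b in Jxy.
  have : 0 < m * P * qform A d by rewrite !mulr_gt0.
  lra.
rewrite le_eqVlt ltNge b0 orbF => /eqP b0'.
have yv : y = v by apply: g_eq0; rewrite -/b b0'.
have G0 : G = 0 by rewrite /G /grad_g yv subrr mulmx0 scaler0.
have FE0 : dotv F d = 0 by rewrite FE G0 /dotv linear0 mul0mx mxE mulr0.
have gyk : b ^+ k = 0 by rewrite b0' expr0n eqn0Ngt k0.
rewrite -/b gyk FE0 in Jxy.
have : 0 < m / k%:R * gcon A v x ^+ k.
  by rewrite mulr_gt0 ?divr_gt0 // exprn_gt0 //; lra.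
lra.
Qed.


Lemma midE y z :
  gcon A v (z + 2^-1 *: (y - z)) = 2^-1 * (gcon A v y + gcon A v z) - 4^-1 * qform A (y - z) /\
  fobj Q q (z + 2^-1 *: (y - z)) = 2^-1 * (fobj Q q y + fobj Q q z) - 8^-1 * qform Q (y - z).
Proof.
have yE : y = z + 1 *: (y - z) by rewrite scale1r addrC subrK.
have sA : A^T = A by case: hA.
have sQ : Q^T = Q by case: hQ.
have gy : gcon A v y = gcon A v z + dotv (grad_g A v z) (y - z) + qform A (y - z).
  by rewrite {1}yE gexp // expr1n !mul1r.
have fy : fobj Q q y = fobj Q q z + dotv (grad_f Q q z) (y - z) + 2^-1 * qform Q (y - z).
  by rewrite {1}yE fexp // expr1n !mul1r !mulr1.
have h4 : (4 : R)^-1 = (2^-1) ^+ 2.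
  by field.
have h8 : (8 : R)^-1 = 2^-1 * (2^-1) ^+ 2.
  by field.
split.
  by rewrite gexp // gy h4; field.
by rewrite fexp // fy h8; field.
Qed.

Definition Cset := [set x : 'cV[R]_n | gcon A v x <= 1].

Lemma Cclosed : closed Cset.
Proof. exact: closed_le_fun (gcon_continuous A v). Qed.

Lemma gmin_unique y z : gmin_on_solset Q q A v y -> gmin_on_solset Q q A v z -> y = z.
Proof.
move=> [[Cy fy] gy] [[Cz fz] gz].
have [gm fm] := midE y z.
set w := z + 2^-1 *: (y - z) in gm fm.
have fyz := fy z Cz; have fzy := fz y Cy.
have qA0 := qformA_ge0 (y - z).
have qQ0 : 0 <= qform Q (y - z) by apply: hQ.2.
have Cw : gcon A v w <= 1 by rewrite gm; lra.
have Sw : solset Q q A v w.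
  split => // t Ct; have := fz t Ct; rewrite fm; lra.
have := gy w Sw; have := gz w Sw; rewrite gm => h1 h2.
have : qform A (y - z) <= 0 by lra.
by move=> /(@qform_eq0_pd _ _ A (y - z) hA.2) /eqP; rewrite subr_eq0 => /eqP.
Qed.


Lemma C0 : Cset !=set0.
Proof. by exists v; rewrite /Cset /= gv ler01. Qed.

Lemma exists_xstar : exists xs, gmin_on_solset Q q A v xs.
Proof.
have [M hM] := C_bounded.
have [s0 Cs0 hs0] := @EVT_min_cV _ _ (fobj Q q) Cset M C0 Cclosed hM (fobj_continuous Q q).
pose X := Cset `&` [set x | fobj Q q x <= fobj Q q s0].
have X0 : X !=set0 by exists s0; split => //=.
have cX : closed X by apply: closedI; [exact: Cclosed | exact: closed_le_fun (fobj_continuous Q q)].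
have [xs [Cxs fxs] hxs] := @EVT_min_cV _ _ (gcon A v) X M X0 cX
  (fun x (Xx : X x) => hM x Xx.1) (gcon_continuous A v).
exists xs; split.
  by split => // y Cy; apply: le_trans fxs (hs0 y Cy).
by move=> y [Cy fy]; apply: hxs; split => //; apply: fy.
Qed.


Lemma conv (xk : nat -> 'cV[R]_n) xs : gmin_on_solset Q q A v xs ->
  (forall k, (0 < k)%N -> forall y, Jk Q q A v m k (xk k) <= Jk Q q A v m k y) ->
  xk @ \oo --> xs.
Proof.
move=> hxs hk; have [[Cxs fxs] gxs] := hxs.
have facts : forall k, (0 < k)%N -> gcon A v (xk k) <= 1 /\
    gcon A v (xk k) <= gcon A v xs /\ fobj Q q (xk k) - fobj Q q xs <= m / k%:R.
  move=> k k0; have g1 := part1 k k0 (xk k) (hk k k0).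
  have f1 := fxs _ g1.
  have J := hk k k0 xs; rewrite /Jk /pen in J.
  set a := gcon A v (xk k) in g1 J *; set c := gcon A v xs in Cxs J *.
  have a0 : 0 <= a := g_ge0 _.
  have c0 : 0 <= c := g_ge0 _.
  have ck : c ^+ k <= 1 by rewrite exprn_ile1.
  have ak : 0 <= a ^+ k by rewrite exprn_ge0.
  have mk : 0 < m / k%:R by rewrite divr_gt0 // ltr0n.
  have e1 : m / k%:R * c ^+ k <= m / k%:R by rewrite ler_piMr // ltW.
  have e2 : 0 <= m / k%:R * a ^+ k by rewrite mulr_ge0 // ltW.
  have e3 : m / k%:R * a ^+ k <= m / k%:R * c ^+ k by lra.
  split => //; split; last by lra.
  rewrite ler_pM2l // in e3.
  by rewrite -(ler_pXn2r k0) // nnegrE.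
apply/cvgrPdist_lt => e e0.
pose K := Cset `&` [set x | gcon A v x <= gcon A v xs] `&` [set x | e <= `|x - xs|].
have Kk : forall k, (0 < k)%N -> ~ K (xk k) -> `|xs - xk k| < e.
  move=> k k0 nK; have [g1 [g2 _]] := facts k k0.
  rewrite ltNge distrC; apply/negP => h; apply: nK; split => //.
have [[z0 Kz0]|K0] := pselect (K !=set0); last first.
  exists 1%N => // k /= k1; apply: Kk => // Kk'; apply: K0; by exists (xk k).
have [M hM] := C_bounded.
have cK : closed K.
  apply: closedI; first apply: closedI.
  - exact: Cclosed.
  - exact: closed_le_fun (gcon_continuous A v).
  - exact: closed_ge_fun (normB_continuous xs).
have [z [[Cz gz] ez] hz] := @EVT_min_cV _ _ (fobj Q q) K M (ex_intro _ z0 Kz0) cK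
  (fun x (Kx : K x) => hM x Kx.1.1) (fobj_continuous Q q).
set de := fobj Q q z - fobj Q q xs.
have de0 : 0 < de.
  rewrite ltNge; apply/negP => hde.
  have Sz : solset Q q A v z.
    split => // t Ct; have := fxs t Ct; rewrite /de in hde; lra.
  have Gz : gmin_on_solset Q q A v z.
    by split => // y Sy; apply: le_trans gz (gxs y Sy).
  have zx := gmin_unique z xs Gz hxs.
  by move: ez; rewrite /= zx subrr normr0 leNgt e0.
pose N := Num.bound (m / de).
have hN : m / de < N%:R by apply: archi_boundP; rewrite divr_ge0 // ltW.
exists N.+1 => // k /= Nk.
have k0 : (0 < k)%N by apply: leq_trans Nk.
apply: Kk => // Kxk.
have := hz _ Kxk; have [_ [_ f3]] := facts k k0.
have kN : N%:R < k%:R :> R by rewrite ltr_nat.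
have kR : 0 < k%:R :> R by rewrite ltr0n.
have : m / k%:R < de.
  rewrite ltr_pdivrMr // -ltr_pdivrMl // mulrC; exact: lt_trans hN kN.
rewrite /de; lra.
Qed.

End Main.

Theorem proposition1 (R : realType) (n : nat)
  (Q : 'M[R]_n) (q : 'cV[R]_n) (A : 'M[R]_n) (v : 'cV[R]_n) (m : R)
  (xk : nat -> 'cV[R]_n) :
  psd Q -> pd A -> 0 < m -> requirement1 Q q A v m ->
  (forall k, (0 < k)%N -> forall y, Jk Q q A v m k (xk k) <= Jk Q q A v m k y) ->
  (forall k, (0 < k)%N -> gcon A v (xk k) <= 1) /\
  exists xstar : 'cV[R]_n,
    gmin_on_solset Q q A v xstar /\
    (forall y, gmin_on_solset Q q A v y -> y = xstar) /\
    (xk @ \oo --> xstar).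
Proof.
move=> hQ hA m0 hreq hk.
split.
  by move=> k k0; apply: (part1 R n Q q A v m hQ hA m0 hreq k k0 (xk k) (hk k k0)).
have [xs hxs] := exists_xstar R n Q q A v hA.
exists xs; split => //; split.
  by move=> y hy; apply: (gmin_unique R n Q q A v hQ hA y xs hy hxs).
exact: (conv R n Q q A v m hQ hA m0 hreq xk xs hxs hk).
Qed.
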